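(* Let $G = (\mathbb{Z}/2\mathbb{Z})^n$, $N = 2^n$, $A \subseteq G$, and $\epsilon \in (0,\tfrac12)$. Suppose that $H \leq G$ is a subgroup which is not $\epsilon$-regular for $A$. Then there is a subgroup $H' \leq H$ such that $|G/H'| \leq 2^{|G/H|}$ and $\mathrm{ind}(A;H') \geq \mathrm{ind}(A;H) + \epsilon^3$.
   Context: For a subgroup $H \leq G$ and $g \in G$, let $A_H^{+g} = \{x \in H : x + g \in A\}$. Define $\mathrm{ind}(A;H) = \frac{1}{N}\sum_{g \in G}\left(|A_H^{+g}|/|H|\right)^2$. An element $g \in G$ is an $\epsilon$-regular value (with respect to $A$ and $H$) if for every nontrivial character $\chi$ of $H$, $\left|\sum_{x \in H} A_H^{+g}(x)\chi(x)\right| \leq \epsilon|H|$, where $A_H^{+g}$ also denotes its indicator function. $H$ is $\epsilon$-regular for $A$ if the number of $g \in G$ which are not $\epsilon$-regular values is at most $\epsilon N$. *)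

(* Defs.v *)
From HB Require Import structures.
From mathcomp Require Import all_boot all_order all_algebra all_field.
From mathcomp Require Import boolp.
Set Implicit Arguments. Unset Strict Implicit. Unset Printing Implicit Defensive.
Import Order.TTheory GRing.Theory Num.Theory.
Local Open Scope ring_scope.

Notation G n := ('rV['F_2]_n).

Definition is_subgroup (n : nat) (H : {set G n}) : Prop :=
  0 \in H /\ (forall x y, x \in H -> y \in H -> x - y \in H).

Definition shiftset (n : nat) (A H : {set G n}) (g : G n) : {set G n} :=
  [set x in H | x + g \in A].

Definition ind (n : nat) (A H : {set G n}) : algC :=
  (2 ^ n)%:R^-1 * \sum_(g : G n) ((#|shiftset A H g|)%:R / (#|H|)%:R) ^+ 2.

Definition is_character (n : nat) (H : {set G n}) (chi : G n -> algC) : Prop :=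
  (forall x, x \in H -> chi x != 0) /\
  (forall x y, x \in H -> y \in H -> chi (x + y) = chi x * chi y).

Definition nontrivial_on (n : nat) (H : {set G n}) (chi : G n -> algC) : Prop :=
  exists2 x, x \in H & chi x != 1.

Definition regular_value (n : nat) (eps : algC) (A H : {set G n}) (g : G n) : Prop :=
  forall chi : G n -> algC, is_character H chi -> nontrivial_on H chi ->
    `| \sum_(x in H) (if x \in shiftset A H g then 1 else 0) * chi x | <= eps * (#|H|)%:R.

Definition eps_regular (n : nat) (eps : algC) (A H : {set G n}) : Prop :=
  (#|[set g : G n | ~~ `[< regular_value eps A H g >]]|)%:R <= eps * (2 ^ n)%:R.

(* |G/H| = |G| / |H| (exact division for a subgroup H, by Lagrange) *)
Definition quot_card (n : nat) (H : {set G n}) : nat := (#|[set: G n]| %/ #|H|)%N.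

(* Main.v *)
Require Import Defs.
From HB Require Import structures.
From mathcomp Require Import all_boot all_order all_algebra all_field all_fingroup.
From mathcomp Require Import boolp ring zify.
Set Implicit Arguments. Unset Strict Implicit. Unset Printing Implicit Defensive.
Import Order.TTheory GRing.Theory Num.Theory.
Local Open Scope ring_scope.

Lemma char2 n (x : 'rV['F_2]_n) : x + x = 0.
Proof. apply/rowP => i; rewrite !mxE; move: (x 0 i) => z. by apply: addrr_pchar2; rewrite pchar_Fp. Qed.

Lemma oppc2 n (x : 'rV['F_2]_n) : - x = x.
Proof. by apply/eqP; rewrite eq_sym -addr_eq0 char2. Qed.

Lemma card_sub_dvd n (H : {set 'rV['F_2]_n}) : is_subgroup H -> (#|H| %| 2^n)%N.
Proof.
case=> H0 HB.
have gH : group_set H.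
  apply/group_setP; split; first exact: H0.
  by move=> x y xH yH; rewrite FinRing.zmodMgE -[y]oppc2; apply: HB.
have := cardSg (subsetT (Group gH)).
by rewrite cardsT card_mx card_Fp // mul1n.
Qed.

Lemma sgD n (H : {set 'rV['F_2]_n}) x y : is_subgroup H -> x \in H -> y \in H -> x + y \in H.
Proof. by case=> _ HB xH yH; rewrite -[y]oppc2; apply: HB. Qed.

Lemma sgDl n (H : {set 'rV['F_2]_n}) x y : is_subgroup H -> y \in H -> (x + y \in H) = (x \in H).
Proof.
move=> sH yH; apply/idP/idP => [xyH|]; last by move=> xH; apply: sgD.
by rewrite -[x]addr0 -(char2 y) addrA; apply: sgD.
Qed.

Lemma reindexH n (H : {set 'rV['F_2]_n}) y (F : 'rV['F_2]_n -> algC) :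
  is_subgroup H -> y \in H -> \sum_(x in H) F x = \sum_(x in H) F (x + y).
Proof.
move=> sH yH; rewrite big_mkcond [RHS]big_mkcond (reindex_inj (addIr y)) /=.
by apply: eq_bigr => x _; rewrite sgDl.
Qed.

Lemma chi0 n (H : {set 'rV['F_2]_n}) chi : is_subgroup H -> is_character H chi -> chi 0 = 1.
Proof.
case=> H0 _ [nz m]; have := m 0 0 H0 H0; rewrite addr0 => e.
by apply: (mulfI (nz 0 H0)); rewrite -e mulr1.
Qed.

Lemma chi_sq n (H : {set 'rV['F_2]_n}) chi x : is_subgroup H -> is_character H chi -> x \in H ->
  chi x ^+ 2 = 1.
Proof. move=> sH [nz m] xH; by rewrite expr2 -m // char2 (chi0 sH). Qed.

Lemma chi_pm n (H : {set 'rV['F_2]_n}) chi x : is_subgroup H -> is_character H chi -> x \in H ->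
  chi x = 1 \/ chi x = -1.
Proof. move=> sH cH xH; have /eqP := chi_sq sH cH xH; rewrite sqrf_eq1 => /orP[]/eqP; tauto. Qed.

Lemma chi_real n (H : {set 'rV['F_2]_n}) chi x : is_subgroup H -> is_character H chi -> x \in H ->
  chi x \is Num.real.
Proof. by move=> sH cH xH; case: (chi_pm sH cH xH) => ->; rewrite ?rpredN rpred1. Qed.

Lemma chi_sum0 n (H : {set 'rV['F_2]_n}) chi : is_subgroup H -> is_character H chi ->
  nontrivial_on H chi -> \sum_(x in H) chi x = 0.
Proof.
move=> sH [nz m] [x0 x0H cx0].
have e : \sum_(x in H) chi x = chi x0 * \sum_(x in H) chi x.
  by rewrite [LHS](reindexH _ sH x0H) mulr_sumr; apply: eq_bigr => x xH; rewrite m // mulrC.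
have : (1 - chi x0) * \sum_(x in H) chi x = 0 by rewrite mulrBl mul1r -e subrr.
by move/eqP; rewrite mulf_eq0 subr_eq0 eq_sym (negbTE cx0) /= => /eqP.
Qed.

Lemma card_sum n (X : {set 'rV['F_2]_n}) (P : pred 'rV['F_2]_n) :
  (#|[set x in X | P x]|)%:R = \sum_(x in X) (P x)%:R :> algC.
Proof.
rewrite -sum1_card natr_sum big_mkcond [RHS]big_mkcond /=.
by apply: eq_bigr => x _; rewrite inE; case: (x \in X); case: (P x).
Qed.

Lemma lin_sum (R : comRingType) (T : finType) (X : {set T}) (f1 f2 f3 f4 : T -> R) (k1 k2 k3 k4 k5 : R) :
  \sum_(x in X) (k1 * f1 x + k2 - (k3 * f2 x + k4 * f3 x) + k5 * f4 x) =
  k1 * (\sum_(x in X) f1 x) + k2 * #|X|%:R - (k3 * (\sum_(x in X) f2 x) + k4 * (\sum_(x in X) f3 x))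
   + k5 * (\sum_(x in X) f4 x).
Proof.
rewrite big_split sumrB /= !big_split /= sumr_const.
by rewrite !mulr_sumr mulr_natr.
Qed.

Lemma cs_gen (R : numDomainType) (T : finType) (X : {set T}) (b c : T -> R) (e t : R) :
  (0 < #|X|)%N -> (forall x, x \in X -> b x \is Num.real) ->
  (forall x, x \in X -> c x \is Num.real) -> t \is Num.real ->
  (forall x, x \in X -> c x ^+ 2 = e) -> \sum_(x in X) c x = 0 ->
  0 <= #|X|%:R * \sum_(x in X) b x ^+ 2 - (\sum_(x in X) b x) ^+ 2 + e * t ^+ 2
       - 2 * t * \sum_(x in X) b x * c x.
Proof.
move=> X0 rb rc rt c2 c0.
have n0 : 0 < #|X|%:R :> R by rewrite ltr0n.
have rB : \sum_(x in X) b x \is Num.real by apply: rpred_sum.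
have H : 0 <= \sum_(x in X) (#|X|%:R * b x - \sum_(x in X) b x - t * c x) ^+ 2.
  apply: sumr_ge0 => x xX.
  have rr : #|X|%:R * b x - \sum_(x in X) b x - t * c x \is Num.real.
    by rewrite !rpredB ?rpredM ?rb ?rc ?realn.
  by rewrite -real_normK // exprn_ge0.
have E : \sum_(x in X) (#|X|%:R * b x - \sum_(x in X) b x - t * c x) ^+ 2 =
   \sum_(x in X) ((#|X|%:R ^+ 2 * b x ^+ 2 + ((\sum_(x in X) b x) ^+ 2 + t ^+ 2 * e))
     - (2 * #|X|%:R * (\sum_(x in X) b x) * b x + 2 * #|X|%:R * t * (b x * c x))
     + 2 * (\sum_(x in X) b x) * t * c x).
  apply: eq_bigr => x xX; rewrite -(c2 x xX); ring.
rewrite E lin_sum c0 in H.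
have H2 : 0 <= #|X|%:R * (#|X|%:R * \sum_(x in X) b x ^+ 2 - (\sum_(x in X) b x) ^+ 2 + e * t ^+ 2
       - 2 * t * \sum_(x in X) b x * c x).
  by apply: le_trans H _; rewrite le_eqVlt; apply/orP; left; apply/eqP; ring.
by rewrite pmulr_rge0 in H2.
Qed.

Definition Ssum n (A H : {set 'rV['F_2]_n}) (chi : 'rV['F_2]_n -> algC) g :=
  \sum_(x in H) (if x \in shiftset A H g then 1 else 0) * chi x.

Lemma SsumE n (A H : {set 'rV['F_2]_n}) chi g :
  Ssum A H chi g = \sum_(x in H) (x + g \in A)%:R * chi x.
Proof. by apply: eq_bigr => x xH; rewrite inE xH /=; case: (x + g \in A). Qed.

Lemma transfer n (A H H' : {set 'rV['F_2]_n}) chi g :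
  is_subgroup H -> H' \subset H ->
  (forall h y, h \in H -> y \in H' -> chi (h + y) = chi h) ->
  \sum_(h in H) (#|shiftset A H' (g + h)|)%:R * chi h = #|H'|%:R * Ssum A H chi g.
Proof.
move=> sH sub cinv.
under eq_bigr => h _ do rewrite card_sum mulr_suml.
rewrite exchange_big /= (eq_bigr (fun _ => Ssum A H chi g)) ?sumr_const ?mulr_natl //.
move=> y yH'; have yH : y \in H by apply: (subsetP sub).
rewrite (reindexH _ sH yH) SsumE; apply: eq_bigr => h hH; rewrite cinv //.
suff -> : y + (g + (h + y)) = h + g by [].
by rewrite addrC -addrA -addrA char2 addr0 addrC.
Qed.

Lemma S_inv n (A H : {set 'rV['F_2]_n}) chi g h : is_subgroup H -> is_character H chi -> h \in H ->
  `|Ssum A H chi (g + h)| = `|Ssum A H chi g|.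
Proof.
move=> sH cH hH.
have -> : Ssum A H chi (g + h) = Ssum A H chi g * chi h.
  rewrite !SsumE (reindexH _ sH hH) mulr_suml; apply: eq_bigr => x xH.
  case: cH => _ m; rewrite m // mulrA.
  suff -> : x + h + (g + h) = x + g by [].
  by rewrite (addrC g) addrA -(addrA x h h) char2 addr0.
rewrite normrM; case: (chi_pm sH cH hH) => ->; by rewrite ?normrN normr1 mulr1.
Qed.

Lemma halve n (H K : {set 'rV['F_2]_n}) chi : is_subgroup H -> is_character H chi ->
  K \subset H -> (forall x y, x \in K -> y \in K -> x + y \in K) ->
  (#|K| <= 2 * #|K :&: [set x | chi x == 1%R]|)%N.
Proof.
move=> sH cH sKH cK.
case: (boolP [exists x in K, chi x != 1]) => [/existsP[x0 /andP[x0K cx0]]|].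
  rewrite -{1}(cardsID [set x | chi x == 1%R] K) mul2n -addnn leq_add2l.
  have x0H : x0 \in H by apply: (subsetP sKH).
  rewrite -(card_imset _ (addIr x0)); apply: subset_leq_card.
  apply/subsetP => y /imsetP[x]; rewrite !inE => /andP[cx xK] ->.
  have xH : x \in H by apply: (subsetP sKH).
  have e1 : chi x = -1 by case: (chi_pm sH cH xH) => // e; rewrite e eqxx in cx.
  have e0 : chi x0 = -1 by case: (chi_pm sH cH x0H) => // e; rewrite e eqxx in cx0.
  by case: cH => _ m; rewrite cK //= m // e1 e0 mulrNN mulr1 eqxx.
move=> nex.
have -> : K :&: [set x | chi x == 1%R] = K.
  apply/setIidPl/subsetP => x xK; rewrite inE.
  by apply: contraR nex => cx; apply/existsP; exists x; rewrite xK.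
by rewrite mul2n -addnn leq_addl.
Qed.

Definition Hs n (H : {set 'rV['F_2]_n}) (chi_of : 'rV['F_2]_n -> 'rV['F_2]_n -> algC) R :=
  [set x in H | all (fun r => chi_of r x == 1) R].

Lemma Hs_prop n (H : {set 'rV['F_2]_n}) chi_of R : is_subgroup H ->
  (forall r, r \in R -> is_character H (chi_of r)) ->
  [/\ is_subgroup (Hs H chi_of R), Hs H chi_of R \subset H &
      (#|H| <= 2 ^ size R * #|Hs H chi_of R|)%N].
Proof.
move=> sH; elim: R => [|r R IH] cR.
  have -> : Hs H chi_of [::] = H by apply/setP => x; rewrite inE andbT.
  by split => //; rewrite expn0 mul1n.
have [sR subR cardR] := IH (fun r' r'R => cR r' ltac:(by rewrite inE r'R orbT)).
have cr : is_character H (chi_of r) by apply: cR; rewrite mem_head.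
have E : Hs H chi_of (r :: R) = Hs H chi_of R :&: [set x | chi_of r x == 1%R].
  by apply/setP => x; rewrite !inE /=; case: (x \in H); case: (chi_of r x == 1); case: all.
rewrite E; move: sR subR cardR; move: (Hs H chi_of R) => K sR subR cardR; split.
- split; first by rewrite !inE (chi0 sH cr) eqxx andbT; case: sR.
  move=> x y; rewrite !inE => /andP[xs cx] /andP[ys cy].
  rewrite oppc2; apply/andP; split; first by rewrite -[y]oppc2; case: sR => _; apply.
  have xH : x \in H by apply: (subsetP subR).
  have yH : y \in H by apply: (subsetP subR).
  by case: cr => _ m; rewrite m // (eqP cx) (eqP cy) mulr1.
- exact: subset_trans (subsetIl _ _) subR.
- apply: (leq_trans cardR); rewrite expnS (mulnC 2) -mulnA leq_pmul2l ?expn_gt0 //.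
  apply: (halve sH cr subR) => x y xs ys.
  by case: sR => _ HB; rewrite -[y]oppc2; apply: HB.
Qed.

Lemma cover n (H Irr : {set 'rV['F_2]_n}) (wit : 'rV['F_2]_n -> 'rV['F_2]_n -> bool) :
  is_subgroup H ->
  (forall r g h, r \in Irr -> h \in H -> wit r (g + h) = wit r g) ->
  (forall g, g \in Irr -> wit g g) ->
  forall j, exists R : seq 'rV['F_2]_n,
    [/\ (size R <= j)%N, {subset R <= Irr} &
        (j * #|H| <= #|[set g | has (fun r => wit r g) R]|)%N
        || (Irr \subset [set g | has (fun r => wit r g) R])].
Proof.
move=> sH winv wself; elim=> [|j [R [sR RI cR]]].
  by exists [::]; split => //; rewrite mul0n.
case: (boolP (Irr \subset [set g | has (fun r => wit r g) R])) => sub.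
  by exists R; split => //; [apply: leqW | rewrite sub orbT].
move: cR; rewrite (negbTE sub) orbF => cR.
have [g gI gC] := subsetPn sub.
exists (g :: R); split => //.
- by move=> r; rewrite inE => /orP[/eqP->|]; [| apply: RI].
apply/orP; left.
set C := [set g0 | has (fun r => wit r g0) R].
set C' := [set g0 | has (fun r => wit r g0) (g :: R)].
have disj : [set g + h | h in H] :&: C = set0.
  apply/setP => x; rewrite !inE; apply/negbTE; apply/negP => /andP[/imsetP[h hH ->]].
  move=> /hasP[r rR w]; move: gC; rewrite inE => /negP; apply; apply/hasP; exists r => //.
  by rewrite -(winv r g h (RI r rR) hH).
have sub1 : [set g + h | h in H] :|: C \subset C'.
  apply/subsetP => x; rewrite !inE => /orP[/imsetP[h hH ->]|].
    by rewrite /= winv // wself.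
  by move=> hx; rewrite /= hx orbT.
apply: leq_trans (subset_leq_card sub1).
have cu := cardsUI [set g + h | h in H] C; rewrite disj cards0 addn0 in cu.
rewrite cu card_imset; last exact: addrI.
by rewrite mulSn leq_add2l.
Qed.

Lemma sg_gt0 n (H : {set 'rV['F_2]_n}) : is_subgroup H -> (0 < #|H|)%N.
Proof. by case=> H0 _; apply/card_gt0P; exists 0. Qed.

Lemma gain n (A H H' : {set 'rV['F_2]_n}) g : is_subgroup H -> is_subgroup H' -> H' \subset H ->
  let D := (#|H|)%:R^-1 * \sum_(h in H) ((#|shiftset A H' (g + h)|)%:R / (#|H'|)%:R) ^+ 2
           - ((#|shiftset A H g|)%:R / (#|H|)%:R) ^+ 2 in
  0 <= D /\ (forall chi eps, 0 < eps -> is_character H chi -> nontrivial_on H chi ->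
     (forall y, y \in H' -> chi y = 1) -> eps * (#|H|)%:R < `|Ssum A H chi g| -> eps ^+ 2 <= D).
Proof.
move=> sH sH' sub D.
have nH : 0 < (#|H|)%:R :> algC by rewrite ltr0n sg_gt0.
have nH' : 0 < (#|H'|)%:R :> algC by rewrite ltr0n sg_gt0.
have hB : \sum_(h in H) (#|shiftset A H' (g + h)|)%:R =
     (#|H'|)%:R * (#|shiftset A H g|)%:R :> algC.
  have := @transfer n A H H' (fun _ => 1) g sH sub (fun _ _ _ _ => erefl).
  under eq_bigr do rewrite mulr1.
  move=> ->; congr (_ * _); rewrite SsumE /shiftset card_sum.
  by apply: eq_bigr => x _; rewrite mulr1.
have hD : D = ((#|H|)%:R * \sum_(h in H) (#|shiftset A H' (g + h)|)%:R ^+ 2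
              - (\sum_(h in H) (#|shiftset A H' (g + h)|)%:R) ^+ 2)
              / ((#|H|)%:R ^+ 2 * (#|H'|)%:R ^+ 2) :> algC.
  rewrite /D hB; under eq_bigr do rewrite expr_div_n.
  rewrite -mulr_suml; field.
  by rewrite !pnatr_eq0 -!lt0n !sg_gt0.
have rb : forall h, h \in H -> (#|shiftset A H' (g + h)|)%:R \is @Num.real algC by move=> *; apply: realn.
have den : 0 < ((#|H|)%:R ^+ 2 * (#|H'|)%:R ^+ 2) :> algC by rewrite mulr_gt0 ?exprn_gt0.
split.
  have := @cs_gen algC _ H (fun h => (#|shiftset A H' (g + h)|)%:R) (fun _ => 0) 0 0 (sg_gt0 sH) rb
     (fun _ _ => rpred0 _) (rpred0 _) (fun _ _ => expr0n _ _) (big1_eq _ _).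
  move=> Q0; rewrite hD; apply: divr_ge0; last exact: ltW. apply: le_trans Q0 _; rewrite le_eqVlt; apply/orP; left; apply/eqP; ring.
move=> chi eps eps0 cH ntH c1 wS.
have := @cs_gen algC _ H (fun h => (#|shiftset A H' (g + h)|)%:R) chi 1
   (\sum_(h in H) (#|shiftset A H' (g + h)|)%:R * chi h) (sg_gt0 sH) rb
   (fun x xH => chi_real sH cH xH) (rpred_sum _ (fun x xH => rpredM (rb x xH) (chi_real sH cH xH)))
   (fun x xH => chi_sq sH cH xH) (chi_sum0 sH cH ntH).
have hT : \sum_(h in H) (#|shiftset A H' (g + h)|)%:R * chi h = (#|H'|)%:R * Ssum A H chi g.
  apply: transfer => // h y hH yH'; case: cH => _ m.
  have yH : y \in H by apply: (subsetP sub).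
  by rewrite m // (c1 y) // mulr1.
have rT : \sum_(h in H) (#|shiftset A H' (g + h)|)%:R * chi h \is Num.real.
  exact: (rpred_sum _ (fun x xH => rpredM (rb x xH) (chi_real sH cH xH))).
move: rT; rewrite hT => rT.
rewrite mul1r => Q1.
rewrite hD ler_pdivlMr //.
apply: le_trans (_ : `|(#|H'|)%:R * Ssum A H chi g| ^+ 2 <= _).
  rewrite normrM normr_nat.
  rewrite (_ : eps ^+ 2 * (_ * _) = (eps * (#|H|)%:R) ^+ 2 * (#|H'|)%:R ^+ 2); last by ring.
  rewrite [X in _ <= X](_ : _ = `|Ssum A H chi g| ^+ 2 * (#|H'|)%:R ^+ 2); last by ring.
  rewrite ler_pM2r ?exprn_gt0 //.
  rewrite !expr2; apply: ler_pM; rewrite ?mulr_ge0 ?ltW //.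
rewrite (real_normK rT).
move: Q1; set Q := _ * _ - _; set x := _ * Ssum A H chi g; move=> Q1.
have : 0 <= Q - x ^+ 2 by apply: le_trans Q1 _; rewrite le_eqVlt; apply/orP; left; apply/eqP; ring.
by rewrite subr_ge0.
Qed.

Lemma two_t t : (2 * t <= 2 ^ t)%N.
Proof. case: t => // s; rewrite expnS leq_pmul2l //; exact: ltn_expl. Qed.

Lemma card_pow n (H : {set 'rV['F_2]_n}) : is_subgroup H -> exists2 a, (a <= n)%N & #|H| = (2 ^ a)%N.
Proof. by move=> sH; apply/(dvdn_pfactor _ _ (isT : prime 2)); apply: card_sub_dvd. Qed.

Lemma pow_div n b : (b <= n)%N -> (2 ^ n %/ 2 ^ b = 2 ^ (n - b))%N.
Proof. by move=> le; rewrite -{1}(subnK le) expnD mulnK ?expn_gt0. Qed.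

Unset Implicit Arguments.

Theorem lemma2p2 (n : nat) (A H : {set 'rV['F_2]_n}) (eps : algC) :
  0 < eps -> eps < 2^-1 ->
  is_subgroup H -> ~ eps_regular eps A H ->
  exists H' : {set 'rV['F_2]_n},
    [/\ is_subgroup H', H' \subset H,
        (quot_card H' <= 2 ^ quot_card H)%N &
        ind A H + eps ^+ 3 <= ind A H'].
Proof.
move=> eps0 epsh sH nreg.
set Irr := [set g : 'rV['F_2]_n | ~~ `[< regular_value eps A H g >]].
have reps : eps \is Num.real by apply: gtr0_real.
have hIrr : eps * (2 ^ n)%:R < (#|Irr|)%:R.
  rewrite real_ltNge ?rpredM ?realn //; apply/negP => h; apply: nreg; exact h.
have ex : forall g, exists chi : 'rV['F_2]_n -> algC, g \in Irr ->
    [/\ is_character H chi, nontrivial_on H chi & eps * (#|H|)%:R < `|Ssum A H chi g|].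
  move=> g; case: (boolP (g \in Irr)) => gI; last by exists (fun _ => 1).
  move: gI; rewrite inE => /asboolPn nr.
  apply: contra_notP nr => nex chi cc nt.
  rewrite real_leNgt ?normr_real ?rpredM ?realn //; apply/negP => lt.
  by apply: nex; exists chi.
case: (choice ex) => chi_of Hchi.
pose wit r g := eps * (#|H|)%:R < `|Ssum A H (chi_of r) g|.
have winv : forall r g h, r \in Irr -> h \in H -> wit r (g + h) = wit r g.
  move=> r g h rI hH; have [cr _ _] := Hchi r rI.
  by rewrite /wit S_inv.
have wself : forall g, g \in Irr -> wit g g by move=> g gI; have [] := Hchi g gI.
have [a le_an Ha] := card_pow sH.
set t := (n - a)%N.
set k := (2 ^ t - t)%N.
have [R [sR RI cR]] := cover sH winv wself k.
set H' := Hs H chi_of R.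
have [sH' subH' cardH'] := @Hs_prop n H chi_of R sH (fun r rR => let: And3 c _ _ := Hchi r (RI r rR) in c).
have [b le_bn Hb] := card_pow sH'.
exists H'; split => //.
  rewrite /quot_card cardsT card_mx card_Fp // mul1n Ha Hb !pow_div // leq_exp2l //.
  move: cardH'; rewrite Ha Hb -expnD leq_exp2l // => cardH'.
  have tX := ltn_expl t (isT : (1 < 2)%N).
  rewrite -/t; move: sR; rewrite /k; move: tX; move: (2 ^ t)%N => X.
  rewrite /t => h1 h2; move: (size R) cardH' h2 => s c2 h2; clear -le_an le_bn c2 h1 h2; lia.
set Cov := [set g | has (fun r => wit r g) R].
have nH : 0 < (#|H|)%:R :> algC by rewrite ltr0n sg_gt0.
have nN : 0 < (2 ^ n)%:R :> algC by rewrite ltr0n expn_gt0.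
have covN : eps * (2 ^ n)%:R <= (#|Cov|)%:R.
  case/orP: cR => [c1|c2]; last first.
    by apply: ltW (lt_le_trans hIrr _); rewrite ler_nat subset_leq_card.
  apply: le_trans (_ : (k * #|H|)%:R <= _); last by rewrite ler_nat.
  have nat1 : (2 ^ n <= k * #|H| * 2)%N.
    rewrite Ha -{1}(subnK le_an) expnD -/t mulnAC leq_pmul2r ?expn_gt0 //.
    have := two_t t; have := ltn_expl t (isT : (1 < 2)%N); rewrite /k.
    move: (2 ^ t)%N => X; lia.
  apply: le_trans (_ : 2^-1 * (2 ^ n)%:R <= _).
    by rewrite ler_pM2r // ltW.
  by rewrite mulrC ler_pdivrMr ?ltr0n // -natrM ler_nat.
pose F g := ((#|shiftset A H' g|)%:R / (#|H'|)%:R) ^+ 2 : algC.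
pose F0 g := ((#|shiftset A H g|)%:R / (#|H|)%:R) ^+ 2 : algC.
pose D g := (#|H|)%:R^-1 * \sum_(h in H) F (g + h) - F0 g.
have key : forall g, (if g \in Cov then eps ^+ 2 else 0) <= D g.
  move=> g; have [D0 Dw] := @gain n A H H' g sH sH' subH'.
  case: ifP => gC; last exact: D0.
  move: gC; rewrite inE => /hasP[r rR w].
  have [cr nt _] := Hchi r (RI r rR).
  apply: (Dw (chi_of r) eps eps0 cr nt _ w).
  by move=> y; rewrite inE => /andP[_ /allP al]; apply/eqP/(al r rR).
have sumD : \sum_g (if g \in Cov then eps ^+ 2 else 0) <= \sum_g D g.
  by apply: ler_sum => g _; exact: key.
rewrite -big_mkcond /= sumr_const in sumD.
have reidx : \sum_g F g = (#|H|)%:R^-1 * \sum_g \sum_(h in H) F (g + h).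
  have inner : forall h, \sum_g F (g + h) = \sum_g F g.
    by move=> h; rewrite [RHS](reindex_inj (addIr h)).
  rewrite exchange_big /= [X in _ * X](eq_bigr (fun _ => \sum_g F g)); last by move=> h _; apply: inner.
  rewrite sumr_const -[_ *+ #|H|]mulr_natl; field; exact: lt0r_neq0.
have eD : \sum_g D g = \sum_g F g - \sum_g F0 g.
  by rewrite sumrB -mulr_sumr reidx.
rewrite eD in sumD.
have : eps ^+ 3 * (2 ^ n)%:R <= \sum_g F g - \sum_g F0 g.
  apply: le_trans sumD; rewrite -[eps ^+ 2 *+ _]mulr_natr.
  rewrite (_ : eps ^+ 3 * (2 ^ n)%:R = eps ^+ 2 * (eps * (2 ^ n)%:R)); last by ring.
  by rewrite ler_pM2l ?exprn_gt0.
rewrite /ind => h3.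
change ((2 ^ n)%:R^-1 * \sum_g F0 g + eps ^+ 3 <= (2 ^ n)%:R^-1 * \sum_g F g).
rewrite -subr_ge0 (_ : _ - _ = (2 ^ n)%:R^-1 * (\sum_g F g - \sum_g F0 g - eps ^+ 3 * (2 ^ n)%:R)).
  by rewrite mulr_ge0 ?invr_ge0 ?ler0n ?subr_ge0.
by field; exact: lt0r_neq0.
Qed.
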